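(* Let $T$ be a bounded operator on a Hilbert space $\mathcal{H}$ with $\|T\|\le1$, let $K$ be a compact operator on $\mathcal{H}$ with dense range, and let $A$ be a bounded operator on $\mathcal{H}$ such that $TK=KA$. If $A^n\to0$ in the weak operator topology as $n\to\infty$, then $T$ is asymptotically stable, i.e. $\|T^nx\|\to0$ as $n\to\infty$ for every $x\in\mathcal{H}$. *)

(* Defs.v *)
From HB Require Import structures.
From mathcomp Require Import all_boot all_order all_algebra.
From mathcomp Require Import all_classical all_reals.
From mathcomp Require Import topology normedtype sequences.
From mathcomp Require Import complex.
Set Implicit Arguments. Unset Strict Implicit. Unset Printing Implicit Defensive.
Import Order.TTheory GRing.Theory Num.Theory.
Import numFieldNormedType.Exports.
Local Open Scope ring_scope.
Local Open Scope classical_set_scope.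

Section Hilbert.
Variables (R : realType) (H : lmodType R[i]) (ip : H -> H -> R[i]).

Definition is_inner_product : Prop :=
  [/\ (forall (a : R[i]) (x y z : H), ip (a *: x + y) z = a * ip x z + ip y z),
      (forall x y : H, ip y x = conjc (ip x y)),
      (forall x : H, 0 <= ip x x) &
      (forall x : H, ip x x = 0 -> x = 0)].

Definition hnorm (x : H) : R := Num.sqrt (complex.Re (ip x x)).

Definition hcauchy (u : nat -> H) : Prop :=
  forall e : R, 0 < e -> exists N : nat,
    forall m n : nat, (N <= m)%N -> (N <= n)%N -> hnorm (u m - u n) < e.

Definition hconverges (u : nat -> H) (l : H) : Prop :=
  (fun n => hnorm (u n - l)) @ \oo --> (0 : R).

Definition is_hilbert_space : Prop :=
  is_inner_product /\
  (forall u : nat -> H, hcauchy u -> exists l : H, hconverges u l).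

Definition bounded_op (T : {linear H -> H}) : Prop :=
  exists M : R, forall x : H, hnorm (T x) <= M * hnorm x.

Definition op_norm_le1 (T : {linear H -> H}) : Prop :=
  forall x : H, hnorm (T x) <= hnorm x.

(* compact operator: the image of the closed unit ball is relatively compact,
   i.e. (in the metric space H) every sequence in the image of the unit ball
   has a norm-convergent subsequence. *)
Definition compact_op (K : {linear H -> H}) : Prop :=
  forall u : nat -> H, (forall n, hnorm (u n) <= 1) ->
    exists (phi : nat -> nat) (l : H),
      (forall n, (phi n < phi n.+1)%N) /\ hconverges (fun n => K (u (phi n))) l.

Definition dense_range (K : {linear H -> H}) : Prop :=
  forall (x : H) (e : R), 0 < e -> exists y : H, hnorm (x - K y) < e.

Definition wot_powers_to0 (A : {linear H -> H}) : Prop :=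
  forall x y : H, (fun n => Normc.normc (ip (iter n A x) y)) @ \oo --> (0 : R).

Definition asymptotically_stable (T : {linear H -> H}) : Prop :=
  forall x : H, (fun n => hnorm (iter n T x)) @ \oo --> (0 : R).

End Hilbert.

(* Main.v *)
Require Import Defs.
From HB Require Import structures.
From mathcomp Require Import all_boot all_order all_algebra.
From mathcomp Require Import all_classical all_reals.
From mathcomp Require Import topology normedtype sequences.
From mathcomp Require Import complex.
From mathcomp Require Import ring lra.
Set Implicit Arguments. Unset Strict Implicit. Unset Printing Implicit Defensive.
Import Order.TTheory GRing.Theory Num.Theory.
Import numFieldNormedType.Exports.
Local Open Scope ring_scope.
Local Open Scope classical_set_scope.
Local Open Scope complex_scope.
Local Open Scope ring_scope.
Local Open Scope classical_set_scope.

Section Basics.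
Variables (R : realType) (H : lmodType R[i]) (ip : H -> H -> R[i]).
Hypothesis hip : is_inner_product ip.
Local Notation hn := (hnorm ip).
Local Notation nc := (@Normc.normc R).
Local Notation Re := (@complex.Re R).

Lemma ipDl x y z : ip (x + y) z = ip x z + ip y z.
Proof. by case: hip => h _ _ _; rewrite -{1}[x]scale1r h mul1r. Qed.
Lemma ip0l z : ip 0 z = 0.
Proof. by apply: (@addrI _ (ip 0 z)); rewrite -ipDl !addr0. Qed.
Lemma ipZl a x z : ip (a *: x) z = a * ip x z.
Proof. by case: hip => h _ _ _; rewrite -[a *: x]addr0 h ip0l addr0. Qed.
Lemma ipC x y : ip y x = (ip x y)^*.
Proof. by case: hip => _ h _ _; rewrite h. Qed.
Lemma ipDr x y z : ip z (x + y) = ip z x + ip z y.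
Proof. by rewrite ipC ipDl rmorphD /= -!ipC. Qed.
Lemma ip0r z : ip z 0 = 0.
Proof. by rewrite ipC ip0l rmorph0. Qed.
Lemma ipZr a x z : ip z (a *: x) = a^* * ip z x.
Proof. by rewrite ipC ipZl rmorphM /= -ipC. Qed.
Lemma ipNl x z : ip (- x) z = - ip x z.
Proof. by rewrite -scaleN1r ipZl mulN1r. Qed.
Lemma ipNr x z : ip z (- x) = - ip z x.
Proof. by rewrite -scaleN1r ipZr rmorphN1 mulN1r. Qed.
Lemma ipBl x y z : ip (x - y) z = ip x z - ip y z.
Proof. by rewrite ipDl ipNl. Qed.
Lemma ipBr x y z : ip z (x - y) = ip z x - ip z y.
Proof. by rewrite ipDr ipNr. Qed.

Lemma ip_ge0 x : 0 <= ip x x. Proof. by case: hip. Qed.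
Lemma ip_real x : ip x x = (Re (ip x x))%:C.
Proof.
have := ip_ge0 x; case: (ip x x) => a b; rewrite lecE /= => /andP[/eqP hb _].
by rewrite hb.
Qed.
Lemma Re_ip_ge0 x : 0 <= Re (ip x x).
Proof. by have := ip_ge0 x; rewrite lecE => /andP[]. Qed.
Lemma hn_ge0 x : 0 <= hn x. Proof. exact: sqrtr_ge0. Qed.
Lemma hn2 x : hn x ^+ 2 = Re (ip x x).
Proof. by rewrite sqr_sqrtr // Re_ip_ge0. Qed.
Lemma hn_eq0 x : hn x = 0 -> x = 0.
Proof.
move=> h0; case: hip => _ _ _; apply; rewrite ip_real -hn2 h0.
by rewrite expr0n.
Qed.
Lemma hn0 : hn 0 = 0.
Proof. by rewrite /hnorm ip0l /= sqrtr0. Qed.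

Lemma Re_add (a b : R[i]) : Re (a + b) = Re a + Re b.
Proof. by case: a; case: b. Qed.

Lemma mulcJ (a : R[i]) : a * a^* = (nc a ^+ 2)%:C.
Proof.
case: a => p q; rewrite /= sqr_sqrtr ?addr_ge0 ?sqr_ge0 //.
rewrite /=; congr (_ +i* _); ring.
Qed.

Lemma nc_ge0 (a : R[i]) : 0 <= nc a.
Proof. by case: a => p q; exact: sqrtr_ge0. Qed.
Lemma ncJ (a : R[i]) : nc a^* = nc a.
Proof. by case: a => p q; rewrite /= sqrrN. Qed.
Lemma Re_le_nc (a : R[i]) : Re a <= nc a.
Proof.
case: a => p q /=; apply: le_trans (ler_norm p) _.
by rewrite -sqrtr_sqr ler_sqrt ?addr_ge0 ?sqr_ge0 // lerDl sqr_ge0.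
Qed.
Lemma ncR (r : R) : 0 <= r -> nc r%:C = r.
Proof. by move=> r0; rewrite /= expr0n addr0 sqrtr_sqr ger0_norm. Qed.
Lemma nc_triangle (a b : R[i]) : nc (a + b) <= nc a + nc b.
Proof. exact: le_normcD. Qed.
Lemma ncN (a : R[i]) : nc (- a) = nc a.
Proof. exact: normcN. Qed.

Lemma hnZ a x : hn (a *: x) = nc a * hn x.
Proof.
rewrite /hnorm ipZl ipZr mulrA mulcJ ip_real -rmorphM /=.
by rewrite sqrtrM ?sqr_ge0 // sqrtr_sqr ger0_norm // nc_ge0.
Qed.
Lemma hnN x : hn (- x) = hn x.
Proof. by rewrite -scaleN1r hnZ ncN Normc.normc1 mul1r. Qed.
Lemma hnB x y : hn (x - y) = hn (y - x).
Proof. by rewrite -hnN opprB. Qed.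


Lemma CS x y : nc (ip x y) <= hn x * hn y.
Proof.
have [y0|yn0] := eqVneq y 0.
  by rewrite y0 ip0r hn0 mulr0 /= expr0n addr0 sqrtr0.
set c := ip x y; set b := Re (ip y y).
have hb : ip y y = b%:C by rewrite ip_real.
have bn0 : b != 0.
  by apply: contra yn0 => /eqP b0; apply/eqP/hn_eq0; rewrite /hnorm -/b b0 sqrtr0.
have bC0 : b%:C != 0 by apply: contra bn0 => /eqP [] ->.
set t := c / b%:C.
have e1 : ip (x - t *: y) y = 0.
  by rewrite ipBl ipZl hb /t divfK // subrr.
have e2 : ip (x - t *: y) (x - t *: y) = ip x x - t * c^*.
  by rewrite ipBr ipZr e1 mulr0 subr0 ipBl ipZl -ipC.
have e3 : t * c^* = (nc c ^+ 2 / b)%:C.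
  rewrite /t mulrAC mulcJ; apply: (mulIf bC0).
  by rewrite divfK // -rmorphM /= divfK.
have h0 := Re_ip_ge0 (x - t *: y).
rewrite e2 e3 ip_real /= -/(Re (ip x x)) in h0.
have hb0 : 0 < b by rewrite lt_def bn0 Re_ip_ge0.
have : nc c ^+ 2 <= (hn x * hn y) ^+ 2.
  rewrite exprMn !hn2 -/b.
  by move: h0; rewrite subr_ge0 ler_pdivrMr.
move=> h; rewrite -(@ler_pXn2r _ 2) // nnegrE ?nc_ge0 ?mulr_ge0 ?hn_ge0 //.
Qed.

Lemma hn_triangle x y : hn (x + y) <= hn x + hn y.
Proof.
have h : hn (x + y) ^+ 2 <= (hn x + hn y) ^+ 2.
  rewrite hn2 ipDl !ipDr !Re_add -!hn2.
  have h1 := Re_le_nc (ip x y); have h2 := Re_le_nc (ip y x).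
  have h3 : nc (ip y x) = nc (ip x y) by rewrite (ipC x y) ncJ.
  rewrite h3 in h2.
  have := CS x y; have := hn_ge0 x; have := hn_ge0 y.
  move=> *; nra.
have := hn_ge0 (x + y); have := hn_ge0 x; have := hn_ge0 y.
move=> *; nra.
Qed.

End Basics.
Lemma cvg0P (R : realType) (u : nat -> R) : u @ \oo --> (0 : R) <->
  forall e : R, 0 < e -> exists N, forall n, (N <= n)%N -> `|u n| < e.
Proof.
rewrite cvgrPdist_lt; split => h e e0.
  have [N _ hN] := h e e0; exists N => n Nn.
  by have := hN n Nn; rewrite sub0r normrN.
have [N hN] := h e e0; exists N => // n Nn.
by rewrite sub0r normrN; apply: hN.
Qed.
Lemma three_small (R : realType) (e : R) : 0 < e -> exists k : nat, (3%:R ^+ k)^-1 < e.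
Proof.
move=> e0; exists (Num.bound e^-1).
have ei : 0 <= e^-1 by rewrite invr_ge0 ltW.
have h1 := archi_boundP ei.
set k := Num.bound e^-1 in h1 *.
have h2 : (k%:R : R) < 3%:R ^+ k by rewrite -natrX ltr_nat ltn_expl.
rewrite -[e]invrK ltf_pV2 ?posrE ?exprn_gt0 ?invr_gt0 ?ltr0n //.
exact: lt_trans h2.
Qed.

Section GH.
Variables (R : realType) (H : lmodType R[i]) (ip : H -> H -> R[i]).
Hypothesis hip : is_inner_product ip.
Hypothesis hcomp : forall u : nat -> H, hcauchy ip u -> exists l : H, hconverges ip u l.
Local Notation hn := (hnorm ip).
Local Notation nc := (@Normc.normc R).
Local Notation Re := (@complex.Re R).

Lemma hn_sub_le x y z : hn (x - z) <= hn (x - y) + hn (y - z).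
Proof. by have := hn_triangle hip (x - y) (y - z); rewrite addrA subrK. Qed.

Lemma ip_approx x y v : nc (ip x v) <= nc (ip y v) + hn (x - y) * hn v.
Proof.
have -> : ip x v = ip y v + ip (x - y) v by rewrite (ipBl hip) addrC subrK.
by apply: le_trans (nc_triangle _ _) _; rewrite lerD2l (CS hip).
Qed.

Lemma GH (u : nat -> H)
  (hw : forall z, (fun n => nc (ip (u n) z)) @ \oo --> (0 : R)) :
  exists B : R, forall N, exists2 n, (N <= n)%N & hn (u n) <= B.
Proof.
have [//|hne] := pselect (exists B : R, forall N, exists2 n, (N <= n)%N & hn (u n) <= B).
exfalso.
pose r (k : nat) : R := (3%:R ^+ k)^-1.
have r_gt0 k : 0 < r k by rewrite invr_gt0 exprn_gt0 ?ltr0n.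
have rS k : r k.+1 = r k / 3%:R by rewrite /r exprSr invfM.
have big : forall k : nat, exists n, (k <= n)%N /\ 3%:R ^+ k <= hn (u n).
  move=> k; apply: contrapT => hk; apply: hne; exists (3%:R ^+ k) => N.
  exists (maxn N k); first exact: leq_maxl.
  rewrite leNgt; apply/negP => hlt; apply: hk; exists (maxn N k).
  by split; [exact: leq_maxr | exact: ltW].
have [nk hnk] := choice big.
pose v k := u (nk k).
pose h k := hn (v k).
have h_ge k : 3%:R ^+ k <= h k by case: (hnk k).
have h_gt0 k : 0 < h k by apply: lt_le_trans (h_ge k); rewrite exprn_gt0 ?ltr0n.
pose rho k := r k * h k.
have rho_ge1 k : 1 <= rho k.
  by rewrite /rho /r mulrC ler_pdivlMr ?exprn_gt0 ?ltr0n // mul1r.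
pose d k := (r k / h k)%:C *: v k.
have ipd k : ip (d k) (v k) = (rho k)%:C.
  rewrite (ipZl hip) (ip_real hip) -/(hn _) -(hn2 hip) -/(h k) -rmorphM /=.
  by congr (_%:C); rewrite /rho expr2 mulrA divfK // gt_eqF.
have hnd k : hn (d k) = r k.
  rewrite (hnZ hip) ncR; last by rewrite divr_ge0 ?ltW.
  by rewrite divfK // gt_eqF.
pose step k x := if rho k <= nc (ip (x + d k) (v k)) then x + d k else x - d k.
pose xs := fix xs k := match k with 0%N => 0 | k'.+1 => step k' (xs k') end.
have xsS k : xs k.+1 = step k (xs k) by [].
have factA k : rho k <= nc (ip (xs k.+1) (v k)).
  rewrite xsS /step; case: ifP => // /negbT; rewrite -ltNge => hlt.
  have e : ip (xs k + d k) (v k) - ip (xs k - d k) (v k) = (rho k *+ 2)%:C.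
    rewrite (ipDl hip) (ipBl hip) ipd rmorphMn /=.
    by rewrite mulr2n; ring.
  have := nc_triangle (ip (xs k + d k) (v k)) (- ip (xs k - d k) (v k)).
  rewrite ncN e ncR; last by rewrite mulrn_wge0 // mulr_ge0 ?ltW.
  by rewrite mulr2n => ?; lra.
have stepb k x : hn (step k x - x) <= r k.
  rewrite /step; case: ifP => _; first by rewrite addrC addKr hnd.
  by rewrite addrC addKr (hnN hip) hnd.
have factB k i : hn (xs (k + i)%N - xs k) <= 3%:R / 2%:R * (r k - r (k + i)%N).
  elim: i => [|i IH]; first by rewrite addn0 subrr (hn0 hip) subrr mulr0.
  rewrite addnS xsS; apply: le_trans (hn_sub_le _ (xs (k + i)%N) _) _.
  apply: le_trans (lerD (stepb _ _) IH) _.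
  rewrite rS; have := r_gt0 (k + i)%N; move=> ?; lra.
have factB' k m : (k <= m)%N -> hn (xs m - xs k) <= 3%:R / 2%:R * r k.
  move=> /subnKC <-; apply: le_trans (factB k (m - k)%N) _.
  have := r_gt0 (k + (m - k))%N; move=> ?; lra.
have rmono k m : (k <= m)%N -> r m <= r k.
  move=> km; rewrite /r lef_pV2 ?posrE ?exprn_gt0 ?ltr0n //.
  by rewrite ler_eXn2l // ltr1n.
have cauchy : hcauchy ip xs.
  move=> e e0; have e3 : 0 < e / 3%:R by rewrite divr_gt0 ?ltr0n.
  have [k hk] := three_small e3.
  exists k => m n km kn.
  apply: le_lt_trans (hn_sub_le _ (xs k) _) _.
  rewrite (hnB hip (xs k)).
  have := factB' k m km; have := factB' k n kn; rewrite -/(r k) in hk.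
  move=> *; lra.
have [x hx] := hcomp cauchy.
have /cvg0P hx' := hx.
have /cvg0P hwx := hw x.
have q0 : 0 < 1 / 4%:R :> R by rewrite divr_gt0 ?ltr0n.
have [N hN] := hwx (1 / 4%:R) q0.
have q1 : 0 < r N / 4%:R by rewrite divr_gt0 ?ltr0n.
have [N' hN'] := hx' (r N / 4%:R) q1.
set m := maxn N' N.+1.
have hm1 : hn (xs m - x) < r N / 4%:R.
  by have := hN' m (leq_maxl _ _); rewrite ger0_norm // hn_ge0.
have hm2 : hn (xs m - xs N.+1) <= r N / 2%:R.
  by have := factB' N.+1 m (leq_maxr _ _); rewrite rS => ?; lra.
have hxN : hn (x - xs N.+1) <= 3%:R / 4%:R * r N.
  apply: le_trans (hn_sub_le _ (xs m) _) _; rewrite (hnB hip x).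
  have := hm1; have := hm2; move=> *; lra.
have hvN : nc (ip (v N) x) < 1 / 4%:R.
  by have := hN (nk N) (proj1 (hnk N)); rewrite ger0_norm // nc_ge0.
have := ip_approx (xs N.+1) x (v N).
rewrite (ipC hip (v N) x) ncJ -/(h N) (hnB hip _ x).
have := ler_wpM2r (ltW (h_gt0 N)) hxN.
have := factA N; have := rho_ge1 N; rewrite /rho.
move=> *; lra.
Qed.

End GH.

Section BS.
Variables (R : realType) (H : lmodType R[i]) (ip : H -> H -> R[i]).
Hypothesis hip : is_inner_product ip.
Local Notation hn := (hnorm ip).
Local Notation nc := (@Normc.normc R).
Local Notation Re := (@complex.Re R).

Lemma ip_suml I (r : seq I) (P : pred I) (F : I -> H) z :
  ip (\sum_(i <- r | P i) F i) z = \sum_(i <- r | P i) ip (F i) z.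
Proof. exact: (big_morph (fun x => ip x z) (fun x y => ipDl hip x y z) (ip0l hip z)). Qed.
Lemma ip_sumr I (r : seq I) (P : pred I) (F : I -> H) z :
  ip z (\sum_(i <- r | P i) F i) = \sum_(i <- r | P i) ip z (F i).
Proof. exact: (big_morph (fun x => ip z x) (fun x y => ipDr hip x y z) (ip0r hip z)). Qed.
Lemma Re_sum I (r : seq I) (P : pred I) (F : I -> R[i]) :
  Re (\sum_(i <- r | P i) F i) = \sum_(i <- r | P i) Re (F i).
Proof. exact: (big_morph Re (@Re_add R) (erefl (Re 0))). Qed.
Lemma hn_sum n (F : 'I_n -> H) : hn (\sum_(i < n) F i) <= \sum_(i < n) hn (F i).
Proof.
elim: n F => [|n IH] F; first by rewrite !big_ord0 (hn0 hip).
rewrite !big_ord_recr /=; apply: le_trans (hn_triangle hip _ _) _.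
by rewrite lerD2r.
Qed.
Lemma hn_natmul x n : hn (x *+ n) = n%:R * hn x.
Proof.
by rewrite -scaler_nat (hnZ hip) normcMn Normc.normc1.
Qed.

Lemma BS (w : nat -> H) (B M : R) (L : H) (K : {linear H -> H})
  (hB : forall n, hn (w n) <= B)
  (hw : forall z, (fun n => nc (ip (w n) z)) @ \oo --> (0 : R))
  (hM : forall x, hn (K x) <= M * hn x)
  (hL : hconverges ip (fun n => K (w n)) L) : L = 0.
Proof.
apply: (hn_eq0 hip); apply/eqP; rewrite eq_le hn_ge0 andbT leNgt; apply/negP => l0.
set l := hn L in l0.
have B0 : 0 <= B by apply: le_trans (hB 0%N); exact: hn_ge0.
set m := `|M|.
have hM' x : hn (K x) <= m * hn x.
  by apply: le_trans (hM x) _; rewrite ler_wpM2r ?hn_ge0 ?ler_norm.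
have m0 : 0 <= m by exact: normr_ge0.
set q := B ^+ 2 + 1.
pose X := 4%:R * m ^+ 2 * q / l ^+ 2.
have q0 : 0 <= q by rewrite addr_ge0 ?sqr_ge0.
have X0 : 0 <= X by rewrite /X divr_ge0 ?sqr_ge0 // !mulr_ge0 ?sqr_ge0 ?ler0n.
pose Nn := (Num.bound X).+1.
have hX : X < Nn%:R.
  by apply: lt_trans (archi_boundP X0) _; rewrite ltr_nat.
set n := (Nn%:R : R) in hX.
have n0 : 0 < n by rewrite ltr0n.
pose eta := n^-1.
have eta0 : 0 < eta by rewrite invr_gt0.
have /cvg0P hL' := hL.
have l2 : 0 < l / 2%:R by rewrite divr_gt0 ?ltr0n.
have [N0 hN0] := hL' _ l2.
have fin : forall s : seq H, exists T, forall k, (T <= k)%N ->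
    forall z, z \in s -> nc (ip (w k) z) < eta.
  elim=> [|z s [T1 hT1]]; first by exists 0%N.
  have /cvg0P hz := hw z.
  have [T2 hT2] := hz _ eta0.
  exists (maxn T1 T2) => k; rewrite geq_max => /andP[k1 k2] y.
  rewrite inE => /orP[/eqP ->|ys]; last exact: hT1.
  by have := hT2 k k2; rewrite ger0_norm // nc_ge0.
have [f hf] := choice fin.
pose pick s := maxn N0 (f s).
pose sq := fix sq j := match j with 0%N => [::] | j'.+1 => w (pick (sq j')) :: sq j' end.
pose c j := w (pick (sq j)).
have cK j : hn (K (c j) - L) < l / 2%:R.
  by have := hN0 _ (leq_maxl N0 (f (sq j))); rewrite ger0_norm // hn_ge0.
have cin : forall j i, (i < j)%N -> c i \in sq j.
  elim=> [//|j IH] i; rewrite ltnS leq_eqVlt => /orP[/eqP ->|ij].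
    by rewrite /= inE eqxx.
  by rewrite /= inE (IH _ ij) orbT.
have cij i j : (i < j)%N -> nc (ip (c j) (c i)) < eta.
  move=> ij; apply: (hf (sq j)); first exact: leq_maxr.
  exact: cin.
have cB j : hn (c j) <= B by apply: hB.
pose S := \sum_(j < Nn) c j.
have hS : hn S ^+ 2 <= n * q.
  rewrite (hn2 hip) ip_suml Re_sum.
  have -> : n * q = \sum_(i < Nn) (B ^+ 2 + eta *+ Nn).
    by rewrite sumr_const card_ord /eta -[(_ + _) *+ Nn]mulr_natl -[n^-1 *+ Nn]mulr_natl -/n mulfV ?gt_eqF.
  apply: ler_sum => i _; rewrite ip_sumr Re_sum.
  have -> : eta *+ Nn = \sum_(j < Nn) eta by rewrite sumr_const card_ord.
  rewrite (bigD1 i) //=.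
  apply: lerD; first by rewrite -(hn2 hip) lerXn2r ?nnegrE ?hn_ge0.
  apply: le_trans (_ : _ <= \sum_(j < Nn | j != i) eta) _; last first.
    rewrite [in X in _ <= X](bigD1 i) //= lerDr; exact: ltW.
  apply: ler_sum => j ji; apply: le_trans (Re_le_nc _) _; apply: ltW.
  have [ij|jl] := ltnP i j; first by rewrite (ipC hip) ncJ; apply: cij.
  have ji' : (j < i)%N by rewrite ltn_neqAle jl andbT; apply: contra ji => /eqP/val_inj ->.
  by apply: cij.
have hKS : n * l / 2%:R <= m * hn S.
  have e1 : hn (L *+ Nn) = n * l by rewrite hn_natmul.
  have e2 : L *+ Nn - K S = - \sum_(j < Nn) (K (c j) - L).
    by rewrite sumrB linear_sum sumr_const card_ord opprB.
  have h1 : hn (L *+ Nn - K S) <= n * (l / 2%:R).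
    rewrite e2 (hnN hip); apply: le_trans (hn_sum _) _.
    apply: le_trans (_ : _ <= \sum_(j < Nn) (l / 2%:R)) _.
      by apply: ler_sum => j _; apply: ltW.
    by rewrite sumr_const card_ord mulr_natl.
  have h2 := hn_sub_le hip (L *+ Nn) (K S) 0.
  rewrite !subr0 e1 in h2.
  have := hM' S; move: h1 h2; move=> *; lra.
have sn : 0 <= hn S by exact: hn_ge0.
have h4 : 4%:R * m ^+ 2 * q < n * l ^+ 2.
  by move: hX; rewrite /X ltr_pdivrMr ?exprn_gt0.
have h5 : (n * l / 2%:R) ^+ 2 <= (m * hn S) ^+ 2.
  have a0 : 0 <= n * l / 2%:R by rewrite divr_ge0 ?ler0n // mulr_ge0 // ltW.
  have b0 : 0 <= m * hn S by rewrite mulr_ge0.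
  by rewrite (@ler_pXn2r _ 2) ?nnegrE.
have h6 : m ^+ 2 * hn S ^+ 2 <= m ^+ 2 * (n * q) by rewrite ler_wpM2l ?sqr_ge0.
have h7 : 4%:R * m ^+ 2 * q * n < n * l ^+ 2 * n by rewrite ltr_pM2r.
move: h5; rewrite !exprMn => h5.
move: h4 h5 h6 h7; move=> *; nra.
Qed.

End BS.

Theorem lemma3p2 (R : realType) (H : lmodType R[i]) (ip : H -> H -> R[i])
  (hH : is_hilbert_space ip)
  (T K A : {linear H -> H})
  (hT : bounded_op ip T) (hT1 : op_norm_le1 ip T)
  (hK : bounded_op ip K) (hKc : compact_op ip K) (hKd : dense_range ip K)
  (hA : bounded_op ip A)
  (hTK : forall x : H, T (K x) = K (A x))
  (hAw : wot_powers_to0 ip A) :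
  asymptotically_stable ip T.
Proof.
case: hH => hip hcomp.
have iterTK n y : iter n T (K y) = K (iter n A y).
  by elim: n => //= n ->; exact: hTK.
have iterB n x z : iter n T (x - z) = iter n T x - iter n T z.
  by elim: n => //= n ->; rewrite linearB.
have iter_le n x : hnorm ip (iter n T x) <= hnorm ip x.
  by elim: n => //= n IH; exact: le_trans (hT1 _) IH.
have iter_mono n m z : (n <= m)%N -> hnorm ip (iter m T z) <= hnorm ip (iter n T z).
  by move=> /subnK <-; rewrite iterD; apply: iter_le.
have key y d : 0 < d -> exists n, hnorm ip (K (iter n A y)) < d.
  move=> d0.
  pose u n := iter n A y.
  have hw : forall z, (fun n => Normc.normc (ip (u n) z)) @ \oo --> (0 : R).
    exact: hAw.
  have [B hB] := GH hip hcomp hw.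
  have hB' : forall N, exists n, (N <= n)%N /\ hnorm ip (u n) <= B.
    by move=> N; have [n ? ?] := hB N; exists n.
  have [sel hsel] := choice hB'.
  have B0 : 0 <= B by apply: le_trans (proj2 (hsel 0%N)); exact: hn_ge0.
  have B1 : 0 < B + 1 by rewrite ltr_wpDl.
  have ci0 : 0 <= (B + 1)^-1 by rewrite invr_ge0 ltW.
  have ci1 : (B + 1)^-1 <= 1 by rewrite invf_le1 // lerDr.
  pose c : R[i] := ((B + 1)^-1)%:C.
  have nc_c : Normc.normc c = (B + 1)^-1 by rewrite ncR.
  pose w' N := c *: u (sel N).
  have w'1 N : hnorm ip (w' N) <= 1.
    rewrite (hnZ hip) nc_c mulrC ler_pdivrMr // mul1r.
    by apply: le_trans (proj2 (hsel N)) _; rewrite lerDl.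
  have [phi [l [phiinc hconv]]] := hKc w' w'1.
  have phi_ge n : (n <= phi n)%N.
    by elim: n => // n IH; exact: leq_ltn_trans IH (phiinc n).
  pose w n := w' (phi n).
  have hww : forall z, (fun n => Normc.normc (ip (w n) z)) @ \oo --> (0 : R).
    move=> z; apply/cvg0P => e e0.
    have /cvg0P hz := hw z.
    have [N hN] := hz e e0.
    exists N => n Nn; rewrite /w /w' (ipZl hip) Normc.normcM nc_c.
    have hsn : (N <= sel (phi n))%N.
      exact: leq_trans Nn (leq_trans (phi_ge n) (proj1 (hsel (phi n)))).
    have := hN _ hsn; rewrite !ger0_norm ?mulr_ge0 ?nc_ge0 //.
    have := nc_ge0 (ip (u (sel (phi n))) z); move=> *; nra.
  case: hK => M hM.
  have l0 : l = 0.
    exact: (BS hip (fun n => w'1 (phi n)) hww hM hconv).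
  rewrite l0 in hconv.
  have /cvg0P hc := hconv.
  have dB : 0 < d / (B + 1) by rewrite divr_gt0.
  have [N hN] := hc _ dB.
  exists (sel (phi N)).
  have := hN N (leqnn N); rewrite subr0 ger0_norm ?hn_ge0 //.
  rewrite /w /w' linearZ (hnZ hip) nc_c -(ltr_pM2l B1).
  have -> : (B + 1) * (d / (B + 1)) = d by rewrite mulrC divfK // gt_eqF.
  by rewrite mulrA mulfV ?gt_eqF // mul1r.
move=> x; apply/cvg0P => e e0.
have e2 : 0 < e / 2%:R by rewrite divr_gt0 ?ltr0n.
have [y hy] := hKd x _ e2.
have [n0 hn0] := key y _ e2.
exists n0 => n hn; rewrite ger0_norm ?hn_ge0 //.
have -> : iter n T x = iter n T (x - K y) + iter n T (K y) by rewrite iterB subrK.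
apply: le_lt_trans (hn_triangle hip _ _) _.
have h1 := iter_le n (x - K y).
have h2 := iter_mono _ _ (K y) hn.
rewrite !iterTK in h2 *.
move: hy hn0 h1 h2; move=> *; lra.
Qed.
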